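(* Let $k \ge 1$ and $0 \le j \le k$. The number of binary words (of any length, including the empty word) that avoid $0^i1^{k-i}$ for all $i \in \{0,1,\dots,k\}$ and contain exactly $j$ zeros equals the ballot number $T(k, j+1) = \frac{k-j}{k+1}\binom{k+j+1}{k}$.
   Context: A binary word avoids a word $u$ if $u$ does not occur in it as a (not necessarily contiguous) subsequence. $0^i$ denotes $i$ consecutive zeros and $1^i$ denotes $i$ consecutive ones. The ballot numbers are $T(n,k) = \frac{n-k+1}{n+1}\binom{n+k}{n}$. *)

(* Defs.v *)
(* Binary words are seq bool with false = 0, true = 1. *)
From mathcomp Require Import all_boot all_order all_algebra.
Set Implicit Arguments. Unset Strict Implicit. Unset Printing Implicit Defensive.
Import Order.TTheory GRing.Theory Num.Theory.

Definition avoids (w u : seq bool) : bool := ~~ subseq u w.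

Definition zo_word (k i : nat) : seq bool := nseq i false ++ nseq (k - i) true.

Definition avoids_all (k : nat) (w : seq bool) : bool :=
  all (fun i => avoids w (zo_word k i)) (iota 0 k.+1).

Definition nzeros (w : seq bool) : nat := count_mem false w.

Definition ballot (n m : nat) : rat :=
  ((n%:Z - m%:Z + 1)%:~R / (n.+1)%:R * ('C(n + m, n))%:R)%R.

(* Main.v *)
Require Import Defs.
From mathcomp Require Import all_boot all_order all_algebra zify.

Lemma subseq_rcons2 (u w : seq bool) (c b : bool) :
  subseq (rcons u c) (rcons w b) = if c == b then subseq u w else subseq (rcons u c) w.
Proof.
rewrite -[LHS]subseq_rev !rev_rcons /=.
case: ifP => _; first by rewrite subseq_rev.
by rewrite -[in RHS]subseq_rev rev_rcons.
Qed.

Lemma nseq_rcons (T : Type) n (x : T) : nseq n.+1 x = rcons (nseq n x) x.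
Proof. by elim: n => //= n ->. Qed.

Lemma subseq_nseq (x : bool) n w : subseq (nseq n x) w = (n <= count_mem x w).
Proof.
elim: w n => [|y w IH] [|n] //=.
rewrite eq_sym; case: (y == x) => /=; rewrite ?IH ?(IH n.+1) ?add0n ?add1n //.
Qed.

Lemma count_rcons1 (x b : bool) w : count_mem x (rcons w b) = count_mem x w + (b == x).
Proof. by rewrite -cats1 count_cat /= addn0. Qed.

Lemma zo_S k i : i <= k -> zo_word k.+1 i = rcons (zo_word k i) true.
Proof. by move=> H; rewrite /zo_word subSn // nseq_rcons rcons_cat. Qed.

Lemma zo_kk k : zo_word k k = nseq k false.
Proof. by rewrite /zo_word subnn cats0. Qed.

Lemma avoids_all_S k w : avoids_all k.+1 w =
  all (fun i => avoids w (zo_word k.+1 i)) (iota 0 k.+1) && avoids w (nseq k.+1 false).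
Proof. rewrite /avoids_all -[k.+2]addn1 iotaD all_cat /= andbT add0n. by rewrite zo_kk. Qed.

Lemma avoids_all_nz k w : avoids_all k w -> nzeros w < k.
Proof.
move/allP/(_ k); rewrite mem_iota /= add0n ltnSn => /(_ isT).
by rewrite /avoids zo_kk subseq_nseq -ltnNge.
Qed.

Lemma avoids_all_0 w : avoids_all 0 w = false.
Proof. by rewrite /avoids_all /= /avoids /zo_word /= sub0seq. Qed.

Lemma avoids_all_nil k : avoids_all k.+1 [::] = true.
Proof.
apply/allP => i _; rewrite /avoids /zo_word.
case: i => [|i] //=; by rewrite subn0.
Qed.

Lemma avoids_all_true k w : avoids_all k.+1 (rcons w true) = avoids_all k w.
Proof.
rewrite avoids_all_S.
have E : all (fun i => avoids (rcons w true) (zo_word k.+1 i)) (iota 0 k.+1)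
         = avoids_all k w.
  apply: eq_in_all => i; rewrite mem_iota add0n ltnS => /= Hi.
  by rewrite zo_S // /avoids subseq_rcons2.
rewrite E; case H: (avoids_all k w); last by []. rewrite andTb.
have := @avoids_all_nz _ _ H.
rewrite /avoids subseq_nseq count_rcons1 /nzeros addn0 -ltnNge ltnS => Hl; apply/idP; lia.
Qed.

Lemma avoids_all_false k w : avoids_all k.+1 (rcons w false) = avoids_all k.+1 w && (nzeros w < k).
Proof.
rewrite !avoids_all_S.
have E : all (fun i => avoids (rcons w false) (zo_word k.+1 i)) (iota 0 k.+1)
       = all (fun i => avoids w (zo_word k.+1 i)) (iota 0 k.+1).
  apply: eq_in_all => i; rewrite mem_iota add0n ltnS => /= Hi.
  by rewrite zo_S // /avoids !subseq_rcons2.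
rewrite E /avoids !subseq_nseq count_rcons1 /nzeros addn1 ltnS -!ltnNge.
case: (all _ _) => //=.
apply/idP/idP => H; lia.
Qed.

Fixpoint Tj (k' : nat) (prev : nat -> seq (seq bool)) (j : nat) : seq (seq bool) :=
  match j with
  | 0 => [:: [::]] ++ map (rcons^~ true) (prev 0)
  | j'.+1 => map (rcons^~ true) (prev j'.+1) ++
             (if j' < k' then map (rcons^~ false) (Tj k' prev j') else [::])
  end.

Fixpoint Sw (k : nat) : nat -> seq (seq bool) :=
  match k with 0 => fun _ => [::] | k'.+1 => Tj k' (Sw k') end.

Lemma mem_map_rcons (u : seq bool) b c s :
  (rcons u b \in map (rcons^~ c) s) = (b == c) && (u \in s).
Proof.
elim: s => [|x s IH] /=; first by rewrite andbF.
by rewrite !in_cons IH eqseq_rcons; case: (b == c); case: (u == x); case: (u \in s).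
Qed.

Lemma nil_map_rcons c (s : seq (seq bool)) : ([::] \in map (rcons^~ c) s) = false.
Proof. by elim: s => //= x s IH; rewrite in_cons IH orbF; case: x. Qed.

Lemma nzeros_rcons w b : nzeros (rcons w b) = nzeros w + ~~ b.
Proof. by rewrite /nzeros count_rcons1; case: b. Qed.

Lemma mem_S k j w : (w \in Sw k j) = avoids_all k w && (nzeros w == j).
Proof.
elim: k j w => [|k IHk] j w; first by rewrite avoids_all_0.
elim: j w => [|j IHj] w; case/lastP: w => [|u b] /=.
- by rewrite avoids_all_nil.
- rewrite in_cons ?mem_cat mem_map_rcons nzeros_rcons IHk.
  have -> : (rcons u b == [::]) = false by case: u.
  case: b => /=; first by rewrite avoids_all_true addn0.
  by rewrite addn1 andbF.
- rewrite mem_cat nil_map_rcons /=.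
  by rewrite andbF; case: ifP => _ //; rewrite nil_map_rcons.
- rewrite mem_cat mem_map_rcons nzeros_rcons IHk.
  case: b => /=.
    by rewrite avoids_all_true addn0; case: ifP => _; rewrite ?mem_map_rcons /= ?orbF.
  rewrite avoids_all_false addn1 eqSS.
  case: ifP => Hj; last first.
    by case: (nzeros u =P j) => [->|]; rewrite ?andbF // Hj andbF.
  rewrite mem_map_rcons /= IHj.
  by case: (nzeros u =P j) => [->|]; rewrite ?andbF ?Hj ?andbT.
Qed.

Lemma uniq_S k j : uniq (Sw k j).
Proof.
elim: k j => [|k IHk] j //=.
elim: j => [|j IHj] /=.
- by rewrite nil_map_rcons (map_inj_uniq (@rcons_injl _ true)) IHk.
- rewrite cat_uniq (map_inj_uniq (@rcons_injl _ true)) IHk /=.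
  case: ifP => _; last by [].
  rewrite (map_inj_uniq (@rcons_injl _ false)) IHj andbT /=; apply/hasPn => x /mapP [y _ ->].
  by rewrite mem_map_rcons.
Qed.

Lemma size_S0 k j : k <= j -> Sw k j = [::].
Proof.
move=> Hkj; case E: (Sw k j) => [|w s] //.
have : w \in Sw k j by rewrite E mem_head.
rewrite mem_S => /andP[/avoids_all_nz H /eqP]; lia.
Qed.

Lemma size_S_eq k j : j <= k -> size (Sw k j) + 'C(k + j + 1, k.+1) = 'C(k + j + 1, k).
Proof.
elim: k j => [|k IHk] j.
  by case: j.
elim: j => [|j IHj] Hj.
  have IH := IHk 0 (leq0n _).
  rewrite /= size_map.
  move: IH; rewrite !addn0 !addn1 binS !binn => IH.
  rewrite binS binn. rewrite bin_small // in IH. lia.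
have -> : k.+1 + j.+1 + 1 = (k + j + 2).+1 by lia.
rewrite !binS.
rewrite /= size_cat size_map.
case: ifP => Hjk.
  rewrite size_map.
  have IH1 := IHk j.+1 Hjk.
  have IH2 := IHj (ltnW Hj).
  move: IH1 IH2.
  have -> : k + j.+1 + 1 = k + j + 2 by lia.
  have -> : k.+1 + j + 1 = k + j + 2 by lia.
  change (Tj k (Sw k) j) with (Sw k.+1 j); lia.
have Ejk : j = k by lia.
subst j.
rewrite size_S0 // addn0 add0n.
have := bin_sub (n := (k + k + 2).+1) (m := k.+1).
have -> : (k + k + 2).+1 - k.+1 = k.+2 by lia.
rewrite !binS => ->; last by lia.
lia.
Qed.

Import GRing.Theory Num.Theory.
Theorem corollary3p6 (k j : nat) (hk : 1 <= k) (hj : j <= k) :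
  exists s : seq (seq bool),
    [/\ uniq s,
        (forall w : seq bool, (w \in s) = avoids_all k w && (nzeros w == j))
      & ((size s)%:R = ballot k j.+1)%R].
Proof.
exists (Sw k j); split; [exact: uniq_S | exact: mem_S |].
have H1 := @size_S_eq k j hj.
have H2 := mul_bin_left (k + j + 1) k.
have Hn : size (Sw k j) * k.+1 = (k - j) * 'C(k + j + 1, k).
  move: H2; rewrite (_ : k + j + 1 - k = j.+1); last by lia.
  nia.
rewrite /ballot.
have -> : (k%:Z - (j.+1)%:Z + 1 = (k - j)%:Z)%R by lia.
rewrite addn1 in Hn; rewrite -[(((k - j)%:Z)%:~R)%R]/(((k - j)%:R : rat)) mulrAC -natrM addnS -Hn natrM mulfK //.
by rewrite pnatr_eq0.
Qed.
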